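(* Let $\mathcal{G}=(V,L)$ be a finite connected undirected graph with monitor set $M$ and non-monitor set $N=V\setminus M$, $\sigma=|N|$, with measurement paths given by Controllable Simple-path Probing (CSP). A set $S\subseteq N$ is $\sigma$-identifiable if and only if each node in $S$ is adjacent to at least two monitors.
   Context: Under CSP, the measurement paths $P$ are all simple paths (no repeated nodes) in $\mathcal{G}$ between two distinct monitors. A failure set is any $F\subseteq N$; a path fails iff it traverses a node of $F$. $P_F$ is the set of paths in $P$ traversing a node of $F$; $F_1,F_2$ distinguishable iff $P_{F_1}\ne P_{F_2}$. $S\subseteq N$ is $k$-identifiable if any two failure sets $F_1,F_2$ with $|F_1|,|F_2|\le k$ and $F_1\cap S\ne F_2\cap S$ are distinguishable. *)

(* Defs.v *)
From mathcomp Require Import all_boot.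
Set Implicit Arguments. Unset Strict Implicit. Unset Printing Implicit Defensive.

Section CSP.
Variables (T : finType) (e : rel T) (M : {set T}).

Definition nonmonitors : {set T} := ~: M.

Definition simple_path (p : seq T) : bool :=
  match p with
  | [::] => false
  | x :: q => path e x q && uniq p
  end.

(* CSP measurement paths: all simple paths between two distinct monitors
   (distinctness of the end points follows from uniq together with size >= 2). *)
Definition csp_path (p : seq T) : bool :=
  match p with
  | [::] => false
  | x :: q => [&& simple_path p, 0 < size q, x \in M & last x q \in M]
  end.

Definition failed_paths (F : {set T}) : pred (seq T) :=
  [pred p | csp_path p && has (mem F) p].

Definition distinguishable (F1 F2 : {set T}) : Prop :=
  ~ (failed_paths F1 =i failed_paths F2).

Definition k_identifiable (k : nat) (S : {set T}) : Prop :=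
  forall F1 F2 : {set T},
    F1 \subset nonmonitors -> F2 \subset nonmonitors ->
    #|F1| <= k -> #|F2| <= k ->
    F1 :&: S != F2 :&: S ->
    distinguishable F1 F2.

End CSP.

(* Main.v *)
Require Import Defs.
From mathcomp Require Import all_boot.

Lemma key_inner (T : finType) (e : rel T) (e_sym : symmetric e) (M : {set T})
  (s : T) (hs : s \notin M) (hc : #|[set m in M | e s m]| <= 1)
  (p : seq T) (hp : csp_path e M p) (hsp : s \in p) :
  exists2 x, x \in p & (x \notin M) && (x != s).
Proof.
case: p hp hsp => [//|x0 q] /= /and4P [/andP [hpath huniq] _ hx0 hlast].
rewrite inE => /orP [/eqP hsx0|hsq]; first by rewrite hsx0 hx0 in hs.
case/splitPr: hsq hpath huniq hlast => q1 q2.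
rewrite cat_path /= => /and3P [_ hus hp2] huniq hlast.
case: q2 hp2 huniq hlast => [|w q3] hp2 huniq hlast.
  by move: hlast; rewrite last_cat /= (negbTE hs).
move: hp2 => /= /andP [hsw _].
have huniq' : uniq ((x0 :: q1) ++ s :: w :: q3) by [].
move: huniq'; rewrite cat_uniq => /and3P [_ hdisj hu2].
move: hu2 => /= /andP [hsn _].
have hu := mem_last x0 q1.
have hus' : last x0 q1 != s.
  by apply/eqP => E; move/negP: hdisj; apply; apply/hasP; exists s; rewrite ?inE ?eqxx // -E.
have huw : last x0 q1 != w.
  by apply/eqP => E; move/negP: hdisj; apply; apply/hasP; exists w; rewrite ?inE ?eqxx ?orbT // -E.
have hws : w != s.
  by apply/eqP => E; move: hsn; rewrite E inE eqxx.
case hum: (last x0 q1 \in M).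
  case hwm: (w \in M).
    exfalso; move: hc; rewrite leqNgt => /negP; apply; apply/card_gt1P.
    exists (last x0 q1), w; split => //; rewrite inE ?hum ?hwm //= ?hsw //.
    by rewrite e_sym.
  exists w; last by rewrite hwm hws.
  by rewrite inE mem_cat !inE eqxx !orbT.
exists (last x0 q1); last by rewrite hum hus'.
move: hu; rewrite !inE mem_cat => /orP [->//|->]; by rewrite !orbT.
Qed.

Theorem proposition3 (T : finType) (e : rel T)
  (e_sym : symmetric e) (e_irr : irreflexive e)
  (e_conn : forall x y : T, connect e x y)
  (M S : {set T}) (hS : S \subset nonmonitors M) :
  k_identifiable e M #|nonmonitors M| S <->
  (forall s, s \in S -> 2 <= #|[set m in M | e s m]|).
Proof.
split.
- move=> Hk s sS; rewrite leqNgt; apply/negP; rewrite ltnS => hc.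
  have hs : s \notin M by move/subsetP: hS => /(_ s sS); rewrite inE.
  apply: (Hk (nonmonitors M) (nonmonitors M :\ s)).
  + exact: subxx.
  + exact: subD1set.
  + by [].
  + by apply: subset_leq_card; apply: subD1set.
  + apply/negP => /eqP /setP /(_ s); rewrite !inE eqxx sS hs /= => //.
  + move=> p; rewrite !inE.
    case hp: (csp_path e M p) => //=.
    apply/idP/idP; last first.
      by apply: sub_has => x; rewrite !inE => /andP [].
    case/hasP => x xp; rewrite inE => hx.
    case: (eqVneq x s) => [exs|hxs].
      subst x; have [y yp /andP [hy hys]] := @key_inner T e e_sym M s hs hc p hp xp.
      by apply/hasP; exists y => //; rewrite /nonmonitors !inE hys hy.
    by apply/hasP; exists x => //; rewrite !inE hxs; rewrite /nonmonitors inE in hx.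
- move=> H F1 F2 hF1 hF2 _ _ hneq.
  have [s sS hsF] : exists2 s, (s \in S) & ((s \in F1) != (s \in F2)).
    suff /existsP [s /andP [a b]] : [exists s, (s \in S) && ((s \in F1) != (s \in F2))].
      by exists s.
    case: existsP => // H0; exfalso; move/negP: hneq; apply; apply/eqP/setP => x.
    rewrite !inE; have /negP H1 : ~ ((x \in S) && ((x \in F1) != (x \in F2))) by move=> h; apply: H0; exists x.
    move: H1.
    by case: (x \in S); case: (x \in F1); case: (x \in F2).
  have hs : s \notin M by move/subsetP: hS => /(_ s sS); rewrite inE.
  have /card_gt1P [m1 [m2 [hm1 hm2 hm12]]] := H s sS.
  move: hm1 hm2; rewrite !inE => /andP [hm1 he1] /andP [hm2 he2].
  move=> /(_ [:: m1; s; m2]).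
  have hm1s : m1 != s by apply/eqP => E; rewrite -E hm1 in hs.
  have hm2s : s != m2 by apply/eqP => E; rewrite E hm2 in hs.
  have hcsp : csp_path e M [:: m1; s; m2].
    by rewrite /= hm1 hm2 e_sym he1 he2 !inE negb_or hm1s hm12 hm2s.
  rewrite !inE hcsp /=.
  have notF (F : {set T}) : F \subset nonmonitors M -> forall m, m \in M -> m \notin F.
    by move=> /subsetP hF m hm; apply/negP => /hF; rewrite inE hm.
  rewrite (negbTE (notF _ hF1 _ hm1)) (negbTE (notF _ hF1 _ hm2)).
  rewrite (negbTE (notF _ hF2 _ hm1)) (negbTE (notF _ hF2 _ hm2)) /= !orbF.
  by move=> E; rewrite E eqxx in hsF.
Qed.
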